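(* Let $k$ be a field of characteristic zero, $n\ge1$, $S=k[x_1,\ldots,x_n]$, and $(S,L)$ a Lie–Rinehart algebra with $L$ a free $S$-module with basis $\alpha_1,\ldots,\alpha_n$, with enveloping algebra $U$. Let $p\geq0$. (i) If $u\in F_pU$ and $\{f^I:I\in\mathbb{N}^n,|I|=p\}\subset S$ satisfy $u\equiv\sum_{|I|=p}f^I\alpha^I \pmod{F_{p-1}U}$, then $$d^0(u)\equiv\sum_{|J|=p-1}d^0\Big(\Omega^0\big((j_n+1)f^{J+e_n},(j_{n-1}+1)f^{J+e_{n-1}},\ldots,(j_1+1)f^{J+e_1}\big)\Big)\alpha^J \pmod{F_{p-2}\mathcal{X}^1},$$ where $J=(j_n,\ldots,j_1)$. (ii) If $\omega\in F_p\mathcal{X}^1$ and $\{f^I_l: I\in\mathbb{N}^n,|I|=p,l\in\{1,\ldots,n\}\}\subset S$ satisfy $\omega\equiv\sum_{l=1}^n\sum_{|I|=p}f^I_l\alpha^I\hat{x}_l\pmod{F_{p-1}\mathcal{X}^1}$, then, writing $f^I=(f^I_1,\ldots,f^I_n)$, $$d^1(\omega)\equiv\sum_{|J|=p-1}d^1\Big(\Omega^1\big((j_n+1)f^{J+e_n},\ldots,(j_1+1)f^{J+e_1}\big)\Big)\alpha^J\pmod{F_{p-2}\mathcal{X}^2}.$$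
   Context: Write $\alpha_i(s)$ for the action of $\alpha_i$ on $s\in S$. For $I=(i_n,\ldots,i_1)\in\mathbb{N}^n$ put $\alpha^I=\alpha_n^{i_n}\cdots\alpha_1^{i_1}\in U$ and $|I|=i_n+\cdots+i_1$; the $\alpha^I$ form a basis of $U$ as a left $S$-module. $F_pU$ is the $S$-span of the $\alpha^I$ with $|I|\le p$ ($F_pU=0$ for $p<0$). For $m\in\{1,\ldots,n\}$, $e_m\in\mathbb{N}^n$ is the tuple with $1$ in the entry indexed by $m$ and $0$ elsewhere (so $\alpha^{I+e_m}$ raises the exponent of $\alpha_m$ by one). Let $W=\operatorname{span}_k(x_1,\ldots,x_n)$, $\hat x_1,\ldots,\hat x_n$ the dual basis, and $\mathcal{X}^q=U\otimes_k\operatorname{Hom}_k(\Lambda^qW,k)$, whose elements are written $\sum_K u_K\,\hat x_{k_1}\wedge\cdots\wedge\hat x_{k_q}$ with $u_K\in U$ (this is the complex computing the Hochschild cohomology $H^\bullet(S,U)$ obtained from the Koszul resolution of $S$). The differentials satisfy $d^0(u)=\sum_{k=1}^n[u,x_k]\hat x_k$ and $d^1(\sum_k u_k\hat x_k)=\sum_{1\le k<l\le n}([u_k,x_l]-[u_l,x_k])\hat x_k\wedge\hat x_l$. $F_p\mathcal{X}^q$ is the $k$-span of the elements $f\alpha^I\hat x_{k_1}\wedge\cdots\wedge\hat x_{k_q}$ with $f\in S$, $|I|\le p$. For $g^1,\ldots,g^n\in S$, $\Omega^0(g^n,\ldots,g^1)=\sum_{i=1}^n g^i\alpha_i\in U$;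 for $f^1,\ldots,f^n\in S^n$ with $f^i=(f^i_1,\ldots,f^i_n)$, $\Omega^1(f^n,\ldots,f^1)=\sum_{k=1}^n\sum_{i=1}^nf^i_k\alpha_i\hat x_k\in\mathcal{X}^1$. For an element $\sum_K c_K\hat x_K$ with all $c_K\in S$, the product $(\sum_Kc_K\hat x_K)\alpha^J$ means $\sum_K c_K\alpha^J\hat x_K$. *)

(* Defs.v *)
From HB Require Import structures.
From mathcomp Require Import all_boot all_algebra.
From mathcomp Require Import mpoly.

Set Implicit Arguments.
Unset Strict Implicit.
Unset Printing Implicit Defensive.

Import GRing.Theory.
Local Open Scope ring_scope.

Section Defs.
Variables (k : fieldType) (n : nat) (U : nzRingType).
Local Notation S := {mpoly k[n]}.
Variables (iota : S -> U) (alpha : 'I_n -> U).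

(* alpha^I = alpha_n^{i_n} ... alpha_1^{i_1}; the index i : 'I_n stands for i+1,
   so the leftmost factor is alpha_(n-1) (paper's alpha_n). *)
Definition alphaI (I : 'X_{1..n}) : U :=
  \prod_(i < n) alpha (rev_ord i) ^+ I (rev_ord i).

(* u \in F_p U : u is an S-combination of the alpha^I with |I| <= p
   (so F_p U = 0 for p < 0). *)
Definition inFU (p : int) (u : U) : Prop :=
  exists (N : nat) (f : 'X_{1..n} -> S),
    u = \sum_(I : 'X_{1..n < N} | (mdeg I)%:Z <= p) iota (f I) * alphaI I.

(* Elements of X^1 = U (x) Hom(W,k): coefficient functions k |-> u_k of \hat x_k.
   Elements of X^2 = U (x) Hom(Lambda^2 W,k): functions (k,l) |-> u_{kl}, where only
   the entries k < l are meaningful (the others are 0 for all elements we build). *)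
Definition X1 := 'I_n -> U.
Definition X2 := 'I_n -> 'I_n -> U.

Definition inFX1 (p : int) (w : X1) : Prop := forall l, inFU p (w l).
Definition inFX2 (p : int) (w : X2) : Prop := forall a b, inFU p (w a b).

Definition xx (i : 'I_n) : U := iota 'X_i.

Definition d0 (u : U) : X1 := fun a => u * xx a - xx a * u.

Definition d1 (w : X1) : X2 := fun a b =>
  if (a < b)%N then (w a * xx b - xx b * w a) - (w b * xx a - xx a * w b) else 0.

(* Omega^0(g^n,...,g^1) = sum_i g^i alpha_i, with g i = g^{i+1}. *)
Definition Omega0 (g : 'I_n -> S) : U := \sum_(i < n) iota (g i) * alpha i.

(* Omega^1(f^n,...,f^1) = sum_k sum_i f^i_k alpha_i \hat x_k, with f i a = f^{i+1}_{a+1}. *)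
Definition Omega1 (f : 'I_n -> 'I_n -> S) : X1 :=
  fun a => \sum_(i < n) iota (f i a) * alpha i.

End Defs.

(* U is the enveloping algebra of the Lie-Rinehart algebra (S, L), L free on
   alpha_1..alpha_n, with anchor alpha_i(s) = anchor i s and brackets
   [alpha_i, alpha_j] = sum_l c i j l alpha_l; S embeds in U via iota, and the
   alpha^I form a basis of U as a left S-module (PBW). *)
Definition LREnvelope (k : fieldType) (n : nat) (U : nzRingType)
    (iota : {rmorphism {mpoly k[n]} -> U}) (alpha : 'I_n -> U)
    (anchor : 'I_n -> {mpoly k[n]} -> {mpoly k[n]})
    (c : 'I_n -> 'I_n -> 'I_n -> {mpoly k[n]}) : Prop :=
      (forall i (a : k) s t, anchor i (a *: s + t) = a *: anchor i s + anchor i t) /\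
      (forall i s t, anchor i (s * t) = s * anchor i t + anchor i s * t) /\
      (forall i j s, anchor i (anchor j s) - anchor j (anchor i s)
                     = \sum_(l < n) c i j l * anchor l s) /\
      (forall i s, alpha i * iota s - iota s * alpha i = iota (anchor i s)) /\
      (forall i j, alpha i * alpha j - alpha j * alpha i
                   = \sum_(l < n) iota (c i j l) * alpha l) /\
      (forall u : U, exists p : int, inFU iota alpha p u) /\
      (forall (N : nat) (f : 'X_{1..n} -> {mpoly k[n]}),
          \sum_(I : 'X_{1..n < N}) iota (f I) * alphaI alpha I = 0 ->
          forall I : 'X_{1..n < N}, f I = 0).

(* Main.v *)
Require Import Defs.
From HB Require Import structures.
From mathcomp Require Import all_boot all_algebra.
From mathcomp Require Import mpoly.
From mathcomp Require Import zify ring.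
From mathcomp Require Import order ssrnum.
Import Order.TTheory GRing.Theory Num.Theory.
Local Open Scope ring_scope.

Lemma rearr3 (V : zmodType) (A B X Y : V) :
  (A - B) - (X - Y) = (A - X) - (B - Y).
Proof.
by rewrite !opprB !addrA (addrAC (A - B)) (addrAC A (- B)) (addrAC (A - X) (- B)).
Qed.

Lemma big_enum_ord (R : Type) (idx : R) (op : R -> R -> R) n (F : 'I_n -> R) :
  \big[op/idx]_(j <- enum 'I_n) F j = \big[op/idx]_(i < n) F i.
Proof. by rewrite enumT [index_enum _]unlock. Qed.

Section Work.
Variables (k : fieldType) (n : nat) (U : nzRingType).
Variable (iota : {rmorphism {mpoly k[n]} -> U}).
Variables (alpha : 'I_n -> U) (anchor : 'I_n -> {mpoly k[n]} -> {mpoly k[n]})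
    (c : 'I_n -> 'I_n -> 'I_n -> {mpoly k[n]}).
Hypothesis HaS : forall i s, alpha i * iota s - iota s * alpha i = iota (anchor i s).
Hypothesis Haa : forall i j, alpha i * alpha j - alpha j * alpha i
                   = \sum_(l < n) iota (c i j l) * alpha l.

Definition prodw (w : seq 'I_n) : U := \prod_(a <- w) alpha a.

Inductive W (p : int) : U -> Prop :=
| W0 : W p 0
| Wg s w : (size w)%:Z <= p -> W p (iota s * prodw w)
| WD u v : W p u -> W p v -> W p (u + v).

Lemma W_opp p u : W p u -> W p (- u).
Proof.
elim=> [|s w hw|u1 v1 _ h1 _ h2]; first by rewrite oppr0; exact: W0.
  by rewrite -mulNr -rmorphN; exact: Wg.
by rewrite opprD; exact: WD.
Qed.

Lemma W_sub p u v : W p u -> W p v -> W p (u - v).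
Proof. by move=> hu hv; apply: WD => //; exact: W_opp. Qed.

Lemma W_mono p q u : p <= q -> W p u -> W q u.
Proof.
move=> pq; elim=> [|s w hw|u1 v1 _ h1 _ h2]; first exact: W0.
  by apply: Wg; exact: le_trans pq.
exact: WD.
Qed.

Lemma W_sum p (I : Type) (r : seq I) (P : pred I) (F : I -> U) :
  (forall i, P i -> W p (F i)) -> W p (\sum_(i <- r | P i) F i).
Proof. by move=> h; apply: big_ind => //; [exact: W0 | exact: WD]. Qed.

Lemma W_iotaL p t u : W p u -> W p (iota t * u).
Proof.
elim=> [|s w hw|u1 v1 _ h1 _ h2]; first by rewrite mulr0; exact: W0.
  by rewrite mulrA -rmorphM; exact: Wg.
by rewrite mulrDr; exact: WD.
Qed.

Lemma prodw_cons a w : prodw (a :: w) = alpha a * prodw w.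
Proof. by rewrite /prodw big_cons. Qed.

Lemma prodw_cat u v : prodw (u ++ v) = prodw u * prodw v.
Proof. by rewrite /prodw big_cat. Qed.

Lemma W_alphaL p a u : W p u -> W (p + 1) (alpha a * u).
Proof.
elim=> [|s w hw|u1 v1 _ h1 _ h2]; first by rewrite mulr0; exact: W0.
  have -> : alpha a * (iota s * prodw w)
     = iota s * prodw (a :: w) + iota (anchor a s) * prodw w.
    by rewrite prodw_cons -HaS mulrBl !mulrA addrC subrK.
  apply: WD; first by apply: Wg => /=; rewrite -addn1 PoszD lerD2r.
  by apply: Wg; apply: (le_trans hw); rewrite lerDl.
by rewrite mulrDr; exact: WD.
Qed.

Lemma W_wordL p w u : W p u -> W (p + (size w)%:Z) (prodw w * u).
Proof.
elim: w p u => [|a w IH] p u hu /=; first by rewrite /prodw big_nil mul1r addr0.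
rewrite prodw_cons -mulrA.
have -> : p + (size w).+1%:Z = (p + (size w)%:Z) + 1 by rewrite -addn1 PoszD addrA.
exact/W_alphaL/IH.
Qed.

Lemma W_mul p q u v : W p u -> W q v -> W (p + q) (u * v).
Proof.
move=> hu hv; elim: hu => [|s w hw|u1 v1 _ h1 _ h2]; first by rewrite mul0r; exact: W0.
  rewrite -mulrA; apply: W_iotaL; have := W_wordL _ w _ hv; apply: W_mono.
  by rewrite addrC lerD2r.
by rewrite mulrDl; exact: WD.
Qed.

Lemma W_iota t : W 0 (iota t).
Proof. have -> : iota t = iota t * prodw [::] by rewrite /prodw big_nil mulr1.
by apply: Wg. Qed.

Lemma W_alpha a : W 1 (alpha a).
Proof.
have -> : alpha a = iota 1 * prodw [:: a] by rewrite rmorph1 mul1r /prodw big_seq1.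
by apply: Wg.
Qed.

Lemma W_neg p u : p < 0 -> W p u -> u = 0.
Proof.
move=> p0; elim=> [//|s w hw|u1 v1 _ -> _ ->]; last by rewrite addr0.
by have := le_lt_trans hw p0.
Qed.


Lemma W_prodw w : W (size w)%:Z (prodw w).
Proof. by rewrite -[prodw w]mul1r -(rmorph1 iota); apply: Wg. Qed.

Lemma W_alpha_comm a w : W (size w)%:Z (alpha a * prodw w - prodw w * alpha a).
Proof.
elim: w => [|b w IH]; first by rewrite /prodw big_nil mulr1 mul1r subrr; exact: W0.
have -> : alpha a * prodw (b :: w) - prodw (b :: w) * alpha a
   = (alpha a * alpha b - alpha b * alpha a) * prodw w
     + alpha b * (alpha a * prodw w - prodw w * alpha a).
  by rewrite !prodw_cons mulrBl mulrBr !mulrA addrA subrK.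
have -> : (size (b :: w))%:Z = 1 + (size w)%:Z by rewrite /= -add1n PoszD.
apply: WD; last by rewrite addrC; exact: W_alphaL.
apply: W_mul; last exact: W_prodw.
rewrite Haa; apply: W_sum => l _; rewrite -(add0r 1).
exact/W_mul/W_alpha/W_iota.
Qed.

Lemma SZ (m : nat) : (m.+1)%:Z - 1 = (m%:Z - 1) + 1.
Proof. by rewrite -addn1 PoszD addrK subrK. Qed.

Lemma perm_W w w' : perm_eq w w' -> W ((size w)%:Z - 1) (prodw w - prodw w').
Proof.
elim: w w' => [|a w1 IH] w' hp.
  have /nilP -> : nilp w' by rewrite /nilp -(perm_size hp).
  by rewrite subrr; exact: W0.
have ha : a \in w' by rewrite -(perm_mem hp) mem_head.
move: hp; case/splitPr: ha => u v hp.
have hp' : perm_eq w1 (u ++ v).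
  rewrite -(perm_cons a); apply: (perm_trans hp).
  exact/permPl/(perm_catCA u [:: a] v).
have hs : size w1 = (size u + size v)%N by rewrite (perm_size hp') size_cat.
have -> : prodw (a :: w1) - prodw (u ++ a :: v)
   = alpha a * (prodw w1 - prodw (u ++ v))
     + (alpha a * prodw u - prodw u * alpha a) * prodw v.
  by rewrite !prodw_cat !prodw_cons mulrBr mulrBl !mulrA addrA subrK.
rewrite /= SZ.
apply: WD; first exact/W_alphaL/IH.
rewrite subrK hs PoszD; apply: W_mul; [exact: W_alpha_comm | exact: W_prodw].
Qed.

Lemma iota_comm s t : iota s * iota t = iota t * iota s.
Proof. by rewrite -!rmorphM mulrC. Qed.

Lemma comm_iota_w w t :
  W ((size w)%:Z - 1) (prodw w * iota t - iota t * prodw w).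
Proof.
elim: w => [|a w IH]; first by rewrite /prodw big_nil mulr1 mul1r subrr; exact: W0.
have -> : prodw (a :: w) * iota t - iota t * prodw (a :: w)
   = alpha a * (prodw w * iota t - iota t * prodw w) + iota (anchor a t) * prodw w.
  by rewrite -HaS prodw_cons mulrBr mulrBl !mulrA addrA subrK.
rewrite /= SZ.
apply: WD; first exact: W_alphaL.
rewrite subrK; exact/W_iotaL/W_prodw.
Qed.

Lemma comm_iota p u t : W p u -> W (p - 1) (u * iota t - iota t * u).
Proof.
elim=> [|s w hw|u1 v1 _ h1 _ h2]; first by rewrite mul0r mulr0 subrr; exact: W0.
  have -> : iota s * prodw w * iota t - iota t * (iota s * prodw w)
     = iota s * (prodw w * iota t - iota t * prodw w).
    by rewrite mulrBr !mulrA iota_comm.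
  apply: W_iotaL; apply: W_mono (comm_iota_w w t); exact: lerB.
have -> : (u1 + v1) * iota t - iota t * (u1 + v1)
   = (u1 * iota t - iota t * u1) + (v1 * iota t - iota t * v1).
  by rewrite mulrDl mulrDr opprD addrACA.
exact: WD.
Qed.


Definition word (J : 'X_{1..n}) : seq 'I_n :=
  flatten [seq nseq (J (rev_ord i)) (rev_ord i) | i <- enum 'I_n].

Lemma prodw_flatten (ss : seq (seq 'I_n)) :
  prodw (flatten ss) = \prod_(s <- ss) prodw s.
Proof.
elim: ss => [|s ss IH]; first by rewrite /prodw !big_nil.
by rewrite /= prodw_cat IH big_cons.
Qed.

Lemma prodw_nseq m a : prodw (nseq m a) = alpha a ^+ m.
Proof.
elim: m => [|m IH]; first by rewrite /prodw big_nil expr0.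
by rewrite /= prodw_cons IH exprS.
Qed.

Lemma prodw_word J : prodw (word J) = alphaI alpha J.
Proof.
rewrite /word prodw_flatten big_map big_enum_ord /alphaI.
by apply: eq_bigr => i _; rewrite prodw_nseq.
Qed.

Lemma count_word J x : count_mem x (word J) = J x.
Proof.
rewrite /word count_flatten sumnE big_map big_map big_enum_ord /=.
rewrite (bigD1 (rev_ord x)) //= big1 ?addn0.
  by rewrite count_nseq /= rev_ordK eqxx mul1n.
move=> i hi; rewrite count_nseq /=.
case: eqP => [hx|]; last by rewrite mul0n.
by move: hi; rewrite -hx rev_ordK eqxx.
Qed.

Lemma size_word J : size (word J) = mdeg J.
Proof.
rewrite /word size_flatten sumnE /shape -map_comp big_map big_enum_ord mdegE /=.
rewrite [RHS](reindex_inj rev_ord_inj) /=.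
by apply: eq_bigr => i _; rewrite size_nseq.
Qed.

Definition mcount (w : seq 'I_n) : 'X_{1..n} := [multinom count_mem i w | i < n].

Lemma perm_word w : perm_eq w (word (mcount w)).
Proof.
by apply/allP => x _ /=; apply/eqP; rewrite count_word mnmE.
Qed.

Lemma mdeg_mcount w : mdeg (mcount w) = size w.
Proof.
by rewrite -size_word -(perm_size (perm_word w)).
Qed.


Lemma W_muln p u m : W p u -> W p (u *+ m).
Proof.
move=> hu; elim: m => [|m IH]; first by rewrite mulr0n; exact: W0.
by rewrite mulrS; exact: WD.
Qed.

Lemma mcount_cons a w : mcount (a :: w) = (mcount w + U_(a))%MM.
Proof. by apply/mnmP => x; rewrite !mnmE /= addnC. Qed.

Lemma rearr (V : zmodType) (aD aS gP Ya SY : V) :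
  aD + gP - (Ya + SY) = (aD - aS) + (aS - SY) + (gP - Ya).
Proof.
rewrite -[aD - aS + _]addrA addKr opprD.
by rewrite [RHS]addrACA [- SY + _]addrC.
Qed.

Lemma SZ2 (m : nat) : (m.+1)%:Z - 2 = (m%:Z - 2) + 1.
Proof. by rewrite -addn1 PoszD -addrA addrAC addrA. Qed.

Lemma SZ3 (m : nat) : (m.+1)%:Z - 2 = m%:Z - 1.
Proof. by rewrite -addn1 PoszD -addrA; congr (_ + _). Qed.

Lemma SZ4 (m : nat) : (m.+1)%:Z - 1 = m%:Z.
Proof. by rewrite -addn1 PoszD addrK. Qed.

Lemma Rlem w t :
  W ((size w)%:Z - 2)
    (prodw w * iota t - iota t * prodw w
     - \sum_(m < n) (iota (anchor m t) * alphaI alpha (mcount w - U_(m))%MM)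
                    *+ count_mem m w).
Proof.
elim: w => [|a w IH].
  rewrite /prodw big_nil mulr1 mul1r subrr big1 ?subrr; first exact: W0.
  by move=> m _; rewrite mulr0n.
set T := iota t.
have -> : prodw (a :: w) * T - T * prodw (a :: w)
    = alpha a * (prodw w * T - T * prodw w) + iota (anchor a t) * prodw w.
  by rewrite -HaS prodw_cons mulrBr mulrBl !mulrA addrA subrK.
set Y := fun m => iota (anchor m t) * alphaI alpha (mcount (a :: w) - U_(m))%MM.
have -> : \sum_(m < n) (iota (anchor m t) * alphaI alpha (mcount (a :: w) - U_(m))%MM)
                    *+ count_mem m (a :: w)
    = Y a + \sum_(m < n) Y m *+ count_mem m w.
  under eq_bigr => m _ do rewrite /= mulrnDr.
  rewrite big_split /=; congr (_ + _).
  rewrite (bigD1 a) //= eqxx mulr1n big1 ?addr0 // => m hm.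
  by rewrite eq_sym (negbTE hm) mulr0n.
set X := fun m => iota (anchor m t) * alphaI alpha (mcount w - U_(m))%MM.
rewrite (rearr _ _ (\sum_(m < n) (alpha a * X m) *+ count_mem m w)).
apply: WD; first apply: WD.
- rewrite SZ2; have -> : alpha a * (prodw w * T - T * prodw w)
       - \sum_(m < n) (alpha a * X m) *+ count_mem m w
     = alpha a * (prodw w * T - T * prodw w - \sum_(m < n) X m *+ count_mem m w).
    by rewrite [in RHS]mulrBr mulr_sumr; congr (_ - _); apply: eq_bigr => m _; rewrite mulrnAr.
  exact: W_alphaL.
- rewrite -sumrB; apply: W_sum => m _; rewrite -mulrnBl.
  case hC: (count_mem m w) => [|C]; first by rewrite mulr0n; exact: W0.
  apply: W_muln.
  set K := (mcount w - U_(m))%MM.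
  have hK : (K + U_(m))%MM = mcount w.
    by apply: submK; rewrite lep1mP mnmE hC.
  have hsz : size w = (mdeg K).+1.
    by rewrite -mdeg_mcount -hK mdegD mdeg1 addn1.
  have hY : (mcount (a :: w) - U_(m))%MM = (K + U_(a))%MM.
    apply/mnmP => x; rewrite !mnmE /=.
    have := congr1 (fun M : 'X_{1..n} => M x) hK; rewrite /= !mnmE.
    by case: (m == x); case: (a == x) => /=; lia.
  rewrite /X /Y hY -/K -!prodw_word.
  have -> : alpha a * (iota (anchor m t) * prodw (word K))
         - iota (anchor m t) * prodw (word (K + U_(a))%MM)
      = iota (anchor m t) * (prodw (a :: word K) - prodw (word (K + U_(a))%MM))
        + iota (anchor a (anchor m t)) * prodw (word K).
    rewrite -(HaS a (anchor m t)) prodw_cons mulrBr mulrBl !mulrA.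
    by rewrite addrAC [_ + (_ - _)]addrC subrK.
  rewrite /= hsz SZ3 SZ4; apply: WD.
    apply: W_iotaL; have := perm_W (a :: word K) (word (K + U_(a))%MM).
    rewrite /= size_word SZ4; apply.
    apply/allP => x _ /=; apply/eqP; rewrite !count_word mnmDE mnm1E addnC.
    by rewrite eq_sym.
  by apply: Wg; rewrite size_word.
- rewrite /Y mcount_cons addmK SZ3 -mulrBr; apply: W_iotaL.
  rewrite -prodw_word; exact/perm_W/perm_word.
Qed.


Lemma mcount_word J : mcount (word J) = J.
Proof. by apply/mnmP => x; rewrite mnmE count_word. Qed.

Lemma comm_Omega0 (g : 'I_n -> {mpoly k[n]}) t :
  Omega0 iota alpha g * iota t - iota t * Omega0 iota alpha g
  = \sum_(i < n) iota (g i) * iota (anchor i t).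
Proof.
rewrite /Omega0 mulr_suml mulr_sumr -sumrB; apply: eq_bigr => i _.
by rewrite -HaS mulrBr !mulrA iota_comm.
Qed.

Lemma reindex_m p m (F : 'X_{1..n} -> U) :
  \sum_(I : 'X_{1..n < p.+1} | mdeg I == p) F I *+ I m
  = \sum_(J : 'X_{1..n < p} | (mdeg J).+1 == p) F (J + U_(m))%MM *+ (J m).+1.
Proof.
rewrite (bigID (fun I : 'X_{1..n < p.+1} => 0 < I m)%N) /=.
rewrite [X in _ + X]big1 ?addr0; last first.
  by move=> I /andP[_]; rewrite lt0n negbK => /eqP ->; rewrite mulr0n.
have hprf : forall J : 'X_{1..n < p}, (mdeg (J + U_(m))%MM < p.+1)%N.
  by move=> J; rewrite mdegD mdeg1 addn1 ltnS bmdeg.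
pose h (J : 'X_{1..n < p}) : 'X_{1..n < p.+1} := BMultinom (hprf J).
pose h' (I : 'X_{1..n < p.+1}) : option 'X_{1..n < p} := insub (I - U_(m))%MM.
rewrite (reindex_omap h h').
  apply: eq_big => J.
    rewrite /= mdegD mdeg1 addn1 mnmE mnm1E eqxx addn1 ltn0Sn andbT.
    by rewrite /h' /= addmK valK eqxx andbT.
  by move=> _; rewrite /= mnmE mnm1E eqxx addn1.
move=> I /andP[/eqP hI hm].
have hK : (I - U_(m) + U_(m))%MM = I by apply: submK; rewrite lep1mP -lt0n.
have hd : (mdeg (I - U_(m))%MM < p)%N.
  have e := congr1 mdeg hK; rewrite mdegD mdeg1 addn1 in e.
  by rewrite -ltnS e hI.
by rewrite /h' insubT /=; congr Some; apply: val_inj => /=.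
Qed.


Lemma Ident p (f : 'X_{1..n} -> {mpoly k[n]}) t :
  \sum_(I : 'X_{1..n < p.+1} | mdeg I == p)
     iota (f I) * \sum_(m < n) (iota (anchor m t) * alphaI alpha (I - U_(m))%MM) *+ I m
  = \sum_(J : 'X_{1..n < p} | (mdeg J).+1 == p)
      (Omega0 iota alpha (fun i => (J i).+1%:R * f (J + U_(i))%MM) * iota t
       - iota t * Omega0 iota alpha (fun i => (J i).+1%:R * f (J + U_(i))%MM))
      * alphaI alpha J.
Proof.
under eq_bigr => I _ do rewrite mulr_sumr.
rewrite exchange_big /=.
under [RHS]eq_bigr => J _ do rewrite comm_Omega0 mulr_suml.
rewrite [RHS]exchange_big /=.
apply: eq_bigr => m _.
under eq_bigr => I _ do rewrite mulrnAr mulrA.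
rewrite (reindex_m p m (fun I => iota (f I) * iota (anchor m t) * alphaI alpha (I - U_(m))%MM)).
apply: eq_bigr => J _.
by rewrite addmK rmorphM /= rmorph_nat mulr_natl !mulrnAl.
Qed.


Lemma rearr2 (V : zmodType) (a b x y r : V) :
  a - b - r = ((a - x) - (b - y)) + (x - y - r).
Proof.
rewrite opprB !addrA.
rewrite [in RHS](addrAC (a - x + y)) [in RHS](addrAC (a - x)) subrK.
by rewrite [in RHS](addrAC (a + y)) addrK.
Qed.

Lemma Key (p : nat) (f : 'X_{1..n} -> {mpoly k[n]}) u t :
  W (p%:Z - 1) (u - \sum_(I : 'X_{1..n < p.+1} | mdeg I == p)
                      iota (f I) * alphaI alpha I) ->
  W (p%:Z - 2)
    (u * iota t - iota t * u
     - \sum_(J : 'X_{1..n < p} | (mdeg J).+1 == p)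
      (Omega0 iota alpha (fun i => (J i).+1%:R * f (J + U_(i))%MM) * iota t
       - iota t * Omega0 iota alpha (fun i => (J i).+1%:R * f (J + U_(i))%MM))
      * alphaI alpha J).
Proof.
move=> h.
set V := \sum_(I : 'X_{1..n < p.+1} | mdeg I == p) iota (f I) * alphaI alpha I.
rewrite -Ident (rearr2 _ _ _ (V * iota t) (iota t * V)).
apply: WD.
  have := comm_iota _ _ t h.
  rewrite mulrBl mulrBr; apply: W_mono.
  by rewrite -addrA.
rewrite /V mulr_suml mulr_sumr -sumrB.
set M := fun I : 'X_{1..n} =>
  \sum_(m < n) (iota (anchor m t) * alphaI alpha (I - U_(m))%MM) *+ I m.
have -> : \sum_(I : 'X_{1..n < p.+1} | mdeg I == p)
      (iota (f I) * alphaI alpha I * iota t - iota t * (iota (f I) * alphaI alpha I))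
  = \sum_(I : 'X_{1..n < p.+1} | mdeg I == p)
      (iota (f I) * (alphaI alpha I * iota t - iota t * alphaI alpha I - M I))
    + \sum_(I : 'X_{1..n < p.+1} | mdeg I == p) iota (f I) * M I.
  rewrite -big_split /=; apply: eq_bigr => I _.
  by rewrite -mulrDr subrK mulrBr !mulrA iota_comm.
rewrite addrK; apply: W_sum => I /eqP hI; apply: W_iotaL.
have := Rlem (word I) t.
by rewrite size_word hI prodw_word mcount_word /M; under eq_bigr => m _ do rewrite count_word.
Qed.


Lemma inFU_W p u : inFU iota alpha p u -> W p u.
Proof.
case=> N [f ->]; apply: W_sum => I hI.
by rewrite -prodw_word; apply: Wg; rewrite size_word.
Qed.

Inductive Fc (p : int) : U -> Prop :=
| Fc0 : Fc p 0
| Fcg s (J : 'X_{1..n}) : (mdeg J)%:Z <= p -> Fc p (iota s * alphaI alpha J)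
| FcD u v : Fc p u -> Fc p v -> Fc p (u + v).

Lemma Fc_mono p q u : p <= q -> Fc p u -> Fc q u.
Proof.
move=> pq; elim=> [|s J hJ|u1 v1 _ h1 _ h2]; first exact: Fc0.
  by apply: Fcg; exact: le_trans pq.
exact: FcD.
Qed.

Lemma Fc_iotaL p t u : Fc p u -> Fc p (iota t * u).
Proof.
elim=> [|s J hJ|u1 v1 _ h1 _ h2]; first by rewrite mulr0; exact: Fc0.
  by rewrite mulrA -rmorphM; exact: Fcg.
by rewrite mulrDr; exact: FcD.
Qed.

Lemma W_Fc m (p : int) u : p < m%:Z -> W p u -> Fc p u.
Proof.
elim: m p u => [|m IH] p u hp hu.
  by rewrite (W_neg _ _ hp hu); exact: Fc0.
elim: hu hp => [|s w hw|u1 v1 _ h1 _ h2] hp; first exact: Fc0; last first.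
  by apply: FcD; [exact: h1 | exact: h2].
have -> : iota s * prodw w = iota s * alphaI alpha (mcount w)
     + iota s * (prodw w - prodw (word (mcount w))).
  by rewrite -prodw_word -mulrDr addrC subrK.
apply: FcD; first by apply: Fcg; rewrite mdeg_mcount.
apply: Fc_iotaL; apply: (Fc_mono ((size w)%:Z - 1)).
  by apply: le_trans hw; rewrite gerBl.
apply: IH; last exact/perm_W/perm_word.
rewrite ltrBlDr; apply: le_lt_trans hw _.
by apply: lt_le_trans hp _; rewrite -addn1 PoszD.
Qed.

Definition G (q : nat) (u : U) : Prop :=
  exists f : 'X_{1..n} -> {mpoly k[n]},
    u = \sum_(I : 'X_{1..n < q.+1}) iota (f I) * alphaI alpha I.

Lemma G_inFU (q : nat) u : G q u -> inFU iota alpha q%:Z u.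
Proof.
case=> f ->; exists q.+1, f; apply: eq_bigl => I.
by rewrite lez_nat -ltnS bmdeg.
Qed.

Lemma Fc_G (q : nat) u : Fc q%:Z u -> G q u.
Proof.
elim=> [|s J hJ|u1 v1 _ [f1 ->] _ [f2 ->]].
- by exists (fun _ => 0); rewrite big1 // => I _; rewrite rmorph0 mul0r.
- have hJ' : (mdeg J < q.+1)%N by rewrite ltnS -lez_nat.
  exists (fun I => if I == J then s else 0).
  rewrite (bigD1 (BMultinom hJ')) //= eqxx big1 ?addr0 // => I hI.
  have -> : (bmnm I == J) = false.
    by apply/negbTE; apply: contra hI => /eqP e; apply/eqP/val_inj.
  by rewrite rmorph0 mul0r.
- exists (fun I => f1 I + f2 I); rewrite -big_split /=.
  by apply: eq_bigr => I _; rewrite rmorphD mulrDl.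
Qed.

Lemma W_inFU (p : int) u : W p u -> inFU iota alpha p u.
Proof.
case: p => [q|q] hu.
  apply: G_inFU; apply: Fc_G; apply: (W_Fc q.+1) => //.
  by rewrite ltz_nat.
have -> : u = 0 by apply: (W_neg _ _ _ hu).
exists 0%N, (fun _ => 0); rewrite big1 // => I _; rewrite rmorph0 mul0r.
Qed.

End Work.

Theorem proposition2p4 (k : fieldType) (n : nat) (U : nzRingType)
    (iota : {rmorphism {mpoly k[n]} -> U}) (alpha : 'I_n -> U)
    (anchor : 'I_n -> {mpoly k[n]} -> {mpoly k[n]})
    (c : 'I_n -> 'I_n -> 'I_n -> {mpoly k[n]}) :
  [pchar k] =i pred0 -> (0 < n)%N ->
  LREnvelope iota alpha anchor c ->
  forall p : nat,
  (* (i) *)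
  (forall (u : U) (f : 'X_{1..n} -> {mpoly k[n]}),
     inFU iota alpha p%:Z u ->
     inFU iota alpha (p%:Z - 1)
       (u - \sum_(I : 'X_{1..n < p.+1} | mdeg I == p)
               iota (f I) * alphaI alpha I) ->
     inFX1 iota alpha (p%:Z - 2)
       (fun l => d0 iota u l
          - \sum_(J : 'X_{1..n < p} | (mdeg J).+1 == p)
               d0 iota (Omega0 iota alpha
                          (fun i => (J i).+1%:R * f (J + U_(i))%MM)) l
               * alphaI alpha J)) /\
  (* (ii) *)
  (forall (w : 'I_n -> U) (f : 'X_{1..n} -> 'I_n -> {mpoly k[n]}),
     inFX1 iota alpha p%:Z w ->
     inFX1 iota alpha (p%:Z - 1)
       (fun l => w l - \sum_(I : 'X_{1..n < p.+1} | mdeg I == p)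
                         iota (f I l) * alphaI alpha I) ->
     inFX2 iota alpha (p%:Z - 2)
       (fun a b => d1 iota w a b
          - \sum_(J : 'X_{1..n < p} | (mdeg J).+1 == p)
               d1 iota (Omega1 iota alpha
                          (fun i l => (J i).+1%:R * f (J + U_(i))%MM l)) a b
               * alphaI alpha J)).
Proof.
move=> _ _ [_ [_ [_ [HaS [Haa _]]]]] p; split.
- move=> u f _ h l.
  apply: (W_inFU _ _ _ _ _ _ _ HaS Haa).
  exact: (Key _ _ _ _ _ _ _ HaS Haa p f u 'X_l (inFU_W _ _ _ _ _ _ _ h)).
- move=> w f _ h a b.
  apply: (W_inFU _ _ _ _ _ _ _ HaS Haa); rewrite /d1.
  case hab: (a < b)%N; last first.
    by rewrite big1 ?subrr; [exact: W0 | move=> J _; rewrite mul0r].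
  under eq_bigr => J _ do rewrite mulrBl.
  rewrite sumrB rearr3; apply: W_sub.
    exact: (Key _ _ _ _ _ _ _ HaS Haa p (fun I => f I a) (w a) 'X_b
              (inFU_W _ _ _ _ _ _ _ (h a))).
  exact: (Key _ _ _ _ _ _ _ HaS Haa p (fun I => f I b) (w b) 'X_a
            (inFU_W _ _ _ _ _ _ _ (h b))).
Qed.
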